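(* Consider the algorithm described in the context. Suppose: (i) $\|\hat H_k\|\leq\kappa_H$ for all $k$, some $\kappa_H\geq1$; (ii) $f$ is bounded below by $f_{\mathrm{low}}$, twice continuously differentiable with $L_H$-Lipschitz Hessian, and $\|\nabla^2 f(\mathbf{x}_k)\|\leq M$ for all $k$; (iii) every step satisfies $\hat{m}_k(\mathbf{0}) - \hat{m}_k(\hat{\mathbf{s}}_k) \geq \kappa_s \max\left(\|\hat{\mathbf{g}}_k\| \min\left(\Delta_k, \frac{\|\hat{\mathbf{g}}_k\|}{\max(\|\hat{H}_k\|,1)}\right), \hat{\tau}^m_k\Delta_k^2\right)$ for some $\kappa_s>0$. Let $\epsilon>0$ with $\theta := (1-\alpha)^2 - \frac{4M(r-1)\alpha^2}{\epsilon(1-\alpha)^2}>0$, and let $K\geq0$. If $\sigma_k\geq\epsilon$ for all $k\leq K$, then $$\#(\mathcal{D}(\gamma_{\mathrm{dec}}^{-1}\Delta)\cap\mathcal{U})\leq c_3\cdot\#(\mathcal{D}(\gamma_{\mathrm{inc}}^{-1}\Delta)\cap\mathcal{S})+c_4(\Delta)\quad\text{for all }\Delta\leq\Delta_0,$$ and $$\#(\mathcal{D}^C(\gamma_{\mathrm{inc}}^{-1}\Delta)\cap\mathcal{S})\leq c_3^{-1}\cdot\#(\mathcal{D}^C(\gamma_{\mathrm{dec}}^{-1}\Delta)\cap\mathcal{U})\quad\text{for all }\Delta\leq\min(\Delta_0,\gamma_{\mathrm{inc}}^{-1}\Delta_{\max}),$$ where $c_3:=\frac{\log(\gamma_{\mathrm{inc}})}{\log(\gamma_{\mathrm{dec}}^{-1})}$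 and $c_4(\Delta):=\frac{\log(\Delta_0/\Delta)}{\log(\gamma_{\mathrm{dec}}^{-1})}$.
   Context: Algorithm: Let $f:\mathbb{R}^n\to\mathbb{R}$. Fix $\mathbf{x}_0$, $p\in\{1,\ldots,n\}$, $0<\Delta_0\leq\Delta_{\max}$, $0<\gamma_{\mathrm{dec}}<1<\gamma_{\mathrm{inc}}$, $\eta\in(0,1)$, $\mu>0$. For $k=0,1,\ldots$: select a random $P_k\in\mathbb{R}^{n\times p}$; build $\hat m_k(\hat{\mathbf{s}})=f(\mathbf{x}_k)+\hat{\mathbf{g}}_k^T\hat{\mathbf{s}}+\frac12\hat{\mathbf{s}}^T\hat H_k\hat{\mathbf{s}}$ ($\hat H_k$ symmetric) which is $P_k$-fully quadratic: constants $\kappa_{\mathrm{ef}},\kappa_{\mathrm{eg}},\kappa_{\mathrm{eh}}>0$ independent of $k$ with $|f(\mathbf{x}_k+P_k\hat{\mathbf{s}})-\hat m_k(\hat{\mathbf{s}})|\leq\kappa_{\mathrm{ef}}\Delta_k^3$, $\|P_k^T\nabla f(\mathbf{x}_k+P_k\hat{\mathbf{s}})-\nabla\hat m_k(\hat{\mathbf{s}})\|\leq\kappa_{\mathrm{eg}}\Delta_k^2$, $\|P_k^T\nabla^2 f(\mathbf{x}_k+P_k\hat{\mathbf{s}})P_k-\hat H_k\|\leq\kappa_{\mathrm{eh}}\Delta_k$ for all $\|\hat{\mathbf{s}}\|\leq\Delta_k$; compute a step $\hat{\mathbf{s}}_k$ with $\|\hat{\mathbf{s}}_k\|\leq\Delta_k$;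 let $R_k:=\frac{f(\mathbf{x}_k)-f(\mathbf{x}_k+P_k\hat{\mathbf{s}}_k)}{\hat m_k(\mathbf{0})-\hat m_k(\hat{\mathbf{s}}_k)}$, $\hat\tau^m_k:=\max(-\lambda_{\min}(\hat H_k),0)$, $\hat\sigma^m_k:=\max(\|\hat{\mathbf{g}}_k\|,\hat\tau^m_k)$; if $R_k\geq\eta$ and $\hat\sigma^m_k\geq\mu\Delta_k$ the iteration is successful: $\mathbf{x}_{k+1}=\mathbf{x}_k+P_k\hat{\mathbf{s}}_k$, $\Delta_{k+1}=\min(\gamma_{\mathrm{inc}}\Delta_k,\Delta_{\max})$; otherwise unsuccessful: $\mathbf{x}_{k+1}=\mathbf{x}_k$, $\Delta_{k+1}=\gamma_{\mathrm{dec}}\Delta_k$. Criticality: $\sigma_k:=\max(\|\nabla f(\mathbf{x}_k)\|,\max(-\lambda_{\min}(\nabla^2 f(\mathbf{x}_k)),0))$. $\alpha\in(0,1)$ is the well-alignment parameter (a matrix $P_k$ is well-aligned if $\|P_k\|\leq P_{\max}$, $\|P_k^T\nabla f(\mathbf{x}_k)\|\geq(1-\alpha)\|\nabla f(\mathbf{x}_k)\|$, $\|\hat{\mathbf{v}}_r\|\geq1-\alpha$, $(\hat{\mathbf{v}}_i^T\hat{\mathbf{v}}_r)^2\leq4\alpha^2$ for $i<r$, where $\nabla^2 f(\mathbf{x}_k)=\sum_{i=1}^r\lambda_i\mathbf{v}_i\mathbf{v}_i^T$ with $\lambda_1\geq\cdots\geq\lambda_r$, $r=\operatorname{rank}(\nabla^2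 f(\mathbf{x}_k))$, orthonormal $\mathbf{v}_i$, and $\hat{\mathbf{v}}_i=P_k^T\mathbf{v}_i$); $r$ in $\theta$ is this rank. Index sets, for fixed $K$: $\mathcal{S}$ (resp. $\mathcal{U}$) = successful (resp. unsuccessful) iterations in $\{0,\ldots,K\}$; $\mathcal{D}(\Delta)$ (resp. $\mathcal{D}^C(\Delta)$) = iterations in $\{0,\ldots,K\}$ with $\Delta_k\geq\Delta$ (resp. $\Delta_k<\Delta$); $\#$ denotes cardinality. *)

(* Defs.v *)
From HB Require Import structures.
From mathcomp Require Import all_boot all_order all_algebra.
From mathcomp Require Import all_classical all_reals all_analysis.
Set Implicit Arguments. Unset Strict Implicit. Unset Printing Implicit Defensive.
Import Order.TTheory GRing.Theory Num.Theory.
Import numFieldNormedType.Exports.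
Local Open Scope classical_set_scope.
Local Open Scope ring_scope.

Section Defs.
Variable R : realType.

Definition enorm m (v : 'cV[R]_m) : R := Num.sqrt (\sum_i (v i 0) ^+ 2).

Definition opnorm m n (A : 'M[R]_(m, n)) : R :=
  sup [set enorm (A *m v) | v in [set v : 'cV[R]_n | enorm v <= 1]].

Definition lambda_min n (A : 'M[R]_n) : R := inf [set a : R | eigenvalue A a].

Definition evec n (i : 'I_n) : 'cV[R]_n := delta_mx i 0.

Definition partial n (i : 'I_n) (f : 'cV[R]_n -> R) : 'cV[R]_n -> R :=
  fun x => derive f x (evec i).
Definition grad n (f : 'cV[R]_n -> R) (x : 'cV[R]_n) : 'cV[R]_n :=
  \col_i partial i f x.
Definition hess n (f : 'cV[R]_n -> R) (x : 'cV[R]_n) : 'M[R]_n :=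
  \matrix_(i, j) partial i (partial j f) x.

Definition twice_cont_diff n (f : 'cV[R]_n -> R) : Prop :=
  (forall x, differentiable f x) /\
  (forall (j : 'I_n) x, differentiable (partial j f) x) /\
  (forall (i j : 'I_n), continuous (partial i (partial j f))).

Definition hess_lipschitz n (f : 'cV[R]_n -> R) (L : R) : Prop :=
  forall x y, opnorm (hess f x - hess f y) <= L * enorm (x - y).

Definition crit n (f : 'cV[R]_n -> R) (x : 'cV[R]_n) : R :=
  Num.max (enorm (grad f x)) (Num.max (- lambda_min (hess f x)) 0).

Definition qmodel p (fx : R) (g : 'cV[R]_p) (H : 'M[R]_p) (s : 'cV[R]_p) : R :=
  fx + (g^T *m s) 0 0 + 2^-1 * (s^T *m H *m s) 0 0.

Definition tau_m p (H : 'M[R]_p) : R := Num.max (- lambda_min H) 0.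
Definition sigma_m p (g : 'cV[R]_p) (H : 'M[R]_p) : R :=
  Num.max (enorm g) (tau_m H).

Definition ratio n p (f : 'cV[R]_n -> R) (x : 'cV[R]_n) (P : 'M[R]_(n, p))
  (g : 'cV[R]_p) (H : 'M[R]_p) (s : 'cV[R]_p) : R :=
  (f x - f (x + P *m s)) / (qmodel (f x) g H 0 - qmodel (f x) g H s).

Definition successful n p (f : 'cV[R]_n -> R) (eta mu : R) (x : 'cV[R]_n)
  (P : 'M[R]_(n, p)) (g : 'cV[R]_p) (H : 'M[R]_p) (s : 'cV[R]_p) (Delta : R)
  : bool :=
  (eta <= ratio f x P g H s) && (mu * Delta <= sigma_m g H).

End Defs.

(* Main.v *)
Require Import Defs.
From HB Require Import structures.
From mathcomp Require Import all_boot all_order all_algebra.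
From mathcomp Require Import all_classical all_reals all_analysis.
From mathcomp Require Import lra ring.
Import Order.TTheory GRing.Theory Num.Theory.
Import numFieldNormedType.Exports.
Local Open Scope classical_set_scope.
Local Open Scope ring_scope.

Lemma fin1 (R : realType) (a b c L S U : R) :
  c <= b + a * U + (- L) * S -> S * L <= a * U + (b - c).
Proof. move=> h. lra. Qed.
Lemma fin2 (R : realType) (a L S U : R) :
  a * S + (- L) * U <= 0 -> S * a <= L * U.
Proof. move=> h. lra. Qed.

Ltac nomm t := lazymatch t with
  | context[Num.min _ _] => fail
  | context[Num.max _ _] => fail
  | _ => idtac end.
Ltac mm := repeat match goal with
  | |- context[Num.min ?a ?b] => nomm a; nomm b; rewrite (minEle a b); case: (leP a b) => ?
  | |- context[Num.max ?a ?b] => nomm a; nomm b; rewrite (maxEle a b); case: (leP a b) => ?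
  end.

Lemma invle (R : realFieldType) (c a b : R) : 0 < c -> (c^-1 * a <= b) = (a <= c * b).
Proof. move=> c0; by rewrite -(ler_pM2l c0) mulrA mulfV ?mul1r // gt_eqF. Qed.
Lemma invle2 (R : realFieldType) (c a b : R) : 0 < c -> (b <= c^-1 * a) = (c * b <= a).
Proof. move=> c0; by rewrite -(ler_pM2l c0) mulrA mulfV ?mul1r // gt_eqF. Qed.
Lemma card_sum N (P : 'I_N -> bool) :
  #|[set k : 'I_N | P k]| = (\sum_(k < N) (P k : nat))%N.
Proof.
rewrite -sum1_card big_mkcond /=; apply: eq_bigr => i _.
have -> : (i \in [set k : 'I_N | P k]) = P i.
  by apply/idP/idP; rewrite in_setE.
by case: (P i).
Qed.
Lemma invlt (R : realFieldType) (c a b : R) : 0 < c -> (b < c^-1 * a) = (c * b < a).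
Proof. move=> c0; by rewrite -(ltr_pM2l c0) mulrA mulfV ?mul1r // gt_eqF. Qed.

Section K.
Variable R : realType.
Variables (Delta : nat -> R) (succ : nat -> bool) (Delta0 Deltamax gdec ginc D : R).
Hypotheses (gd0 : 0 < gdec) (gd1 : gdec < 1) (gi1 : 1 < ginc) (D0 : 0 < D)
  (HD0 : Delta 0%N = Delta0)
  (Hs : forall k, succ k -> Delta k.+1 = Num.min (ginc * Delta k) Deltamax)
  (Hu : forall k, ~~ succ k -> Delta k.+1 = gdec * Delta k).

Lemma step1 N :
  Num.max (Delta N.+1) D
  <= Num.max (Delta N) D * ginc ^+ ((ginc^-1 * D <= Delta N) && succ N)
      * gdec ^+ ((gdec^-1 * D <= Delta N) && ~~ succ N).
Proof.
have gg : gdec^-1 * gdec = 1 by rewrite mulVf // gt_eqF.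
have ig : ginc^-1 * ginc = 1 by rewrite mulVf // gt_eqF // (lt_trans ltr01).
have gpos : 0 < gdec^-1 by rewrite invr_gt0.
have ipos : 0 < ginc^-1 by rewrite invr_gt0 (lt_trans ltr01).
have gi0 : 0 < ginc by apply: (lt_trans ltr01).
rewrite ?(invle _ _ _ _ gd0) ?(invle _ _ _ _ gi0) ?(invlt _ _ _ _ gd0) ?(invlt _ _ _ _ gi0).
case Sk: (succ N) => /=.
- rewrite (Hs N Sk) ?andbT ?andbF ?expr0 ?mulr1.
  have [H|H] := leP (D) (ginc * Delta N); rewrite ?expr1 ?expr0 ?mulr1; mm;
   try nra.
- rewrite (Hu N (negbT Sk)) ?andbT ?andbF ?expr0 ?mulr1.
  have [H|H] := leP (D) (gdec * Delta N); rewrite ?expr1 ?expr0 ?mulr1; mm;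
   try nra.

Qed.

Lemma step2 (DD : ginc * D <= Deltamax) N :
  Num.min (Delta N) D * gdec ^+ ((Delta N < gdec^-1 * D) && ~~ succ N)
           * ginc ^+ ((Delta N < ginc^-1 * D) && succ N)
  <= Num.min (Delta N.+1) D.
Proof.
have gg : gdec^-1 * gdec = 1 by rewrite mulVf // gt_eqF.
have ig : ginc^-1 * ginc = 1 by rewrite mulVf // gt_eqF // (lt_trans ltr01).
have gpos : 0 < gdec^-1 by rewrite invr_gt0.
have ipos : 0 < ginc^-1 by rewrite invr_gt0 (lt_trans ltr01).
have gi0 : 0 < ginc by apply: (lt_trans ltr01).
rewrite ?(invle _ _ _ _ gd0) ?(invle _ _ _ _ gi0) ?(invlt _ _ _ _ gd0) ?(invlt _ _ _ _ gi0).
have DM : D < Deltamax.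
  have : D < ginc * D by rewrite -{1}(mul1r D) ltr_pM2r.
  move=> h; exact: (lt_le_trans h DD).
case Sk: (succ N) => /=.
- rewrite (Hs N Sk) ?andbT ?andbF ?expr0 ?mulr1.
  have [H|H] := ltP (ginc * Delta N) D; rewrite ?expr1 ?expr0 ?mulr1; mm;
   try nra.
- rewrite (Hu N (negbT Sk)) ?andbT ?andbF ?expr0 ?mulr1.
  have [H|H] := ltP (gdec * Delta N) D; rewrite ?expr1 ?expr0 ?mulr1; mm;
   try nra.
Qed.
Lemma inv1 (DD : D <= Delta0) N :
  Num.max (Delta N) D <=
  Delta0 * ginc ^+ (\sum_(k < N) nat_of_bool ((ginc^-1 * D <= Delta k)%R && succ k))%N
         * gdec ^+ (\sum_(k < N) nat_of_bool ((gdec^-1 * D <= Delta k)%R && ~~ succ k))%N.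
Proof.
have gi0 : 0 < ginc by apply: (lt_trans ltr01).
elim: N => [|N IH].
  by rewrite !big_ord0 !expr0 !mulr1 HD0 ge_max DD lexx.
apply: le_trans (step1 N) _.
rewrite !big_ord_recr /= !exprD.
set s := (\sum_(i < N) _)%N in IH *; set u := (\sum_(i < N) _)%N in IH *.
set bs := nat_of_bool _; set bu := nat_of_bool _.
have -> : Delta0 * (ginc ^+ s * ginc ^+ bs) * (gdec ^+ u * gdec ^+ bu)
  = Delta0 * ginc ^+ s * gdec ^+ u * ginc ^+ bs * gdec ^+ bu by ring.
apply: ler_wpM2r; first by apply: exprn_ge0; apply: ltW.
apply: ler_wpM2r; first by apply: exprn_ge0; apply: ltW.
exact: IH.
Qed.

Lemma inv2 (DD : D <= Delta0) (DM : ginc * D <= Deltamax) N :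
  D * ginc ^+ (\sum_(k < N) nat_of_bool ((Delta k < ginc^-1 * D)%R && succ k))%N
    * gdec ^+ (\sum_(k < N) nat_of_bool ((Delta k < gdec^-1 * D)%R && ~~ succ k))%N
  <= Num.min (Delta N) D.
Proof.
have gi0 : 0 < ginc by apply: (lt_trans ltr01).
elim: N => [|N IH].
  by rewrite !big_ord0 !expr0 !mulr1 HD0 le_min DD lexx.
apply: le_trans (step2 DM N).
rewrite !big_ord_recr /= !exprD.
set s := (\sum_(i < N) _)%N in IH *; set u := (\sum_(i < N) _)%N in IH *.
set bs := nat_of_bool _; set bu := nat_of_bool _.
have -> : D * (ginc ^+ s * ginc ^+ bs) * (gdec ^+ u * gdec ^+ bu)
  = D * ginc ^+ s * gdec ^+ u * gdec ^+ bu * ginc ^+ bs by ring.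
apply: ler_wpM2r; first by apply: exprn_ge0; apply: ltW.
apply: ler_wpM2r; first by apply: exprn_ge0; apply: ltW.
exact: IH.
Qed.
End K.

Theorem lemma3p12 (R : realType) (n p : nat) (f : 'cV[R]_n -> R)
  (x0 : 'cV[R]_n) (Delta0 Deltamax gdec ginc eta mu : R)
  (x : nat -> 'cV[R]_n) (Delta : nat -> R) (P : nat -> 'M[R]_(n, p))
  (ghat : nat -> 'cV[R]_p) (Hhat : nat -> 'M[R]_p) (shat : nat -> 'cV[R]_p)
  (kappaH flow LH M kappas alpha eps : R) (K : nat) :
  (* algorithm parameters *)
  (1 <= p)%N -> (p <= n)%N ->
  0 < Delta0 -> Delta0 <= Deltamax ->
  0 < gdec -> gdec < 1 -> 1 < ginc ->
  0 < eta -> eta < 1 -> 0 < mu ->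
  0 < alpha -> alpha < 1 ->
  (* iteration of the algorithm (any realization of the random P_k) *)
  x 0%N = x0 -> Delta 0%N = Delta0 ->
  (forall k, (Hhat k)^T = Hhat k) ->
  (exists kef keg keh : R, [/\ 0 < kef, 0 < keg, 0 < keh &
     forall k (s : 'cV[R]_p), enorm s <= Delta k ->
       [/\ `| f (x k + P k *m s) - qmodel (f (x k)) (ghat k) (Hhat k) s |
             <= kef * Delta k ^+ 3,
           enorm ((P k)^T *m grad f (x k + P k *m s) - (ghat k + Hhat k *m s))
             <= keg * Delta k ^+ 2 &
           opnorm ((P k)^T *m hess f (x k + P k *m s) *m P k - Hhat k)
             <= keh * Delta k]]) ->
  (forall k, enorm (shat k) <= Delta k) ->
  (forall k, successful f eta mu (x k) (P k) (ghat k) (Hhat k) (shat k) (Delta k) ->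
     x k.+1 = x k + P k *m shat k /\ Delta k.+1 = Num.min (ginc * Delta k) Deltamax) ->
  (forall k, ~~ successful f eta mu (x k) (P k) (ghat k) (Hhat k) (shat k) (Delta k) ->
     x k.+1 = x k /\ Delta k.+1 = gdec * Delta k) ->
  (* (i) *)
  1 <= kappaH -> (forall k, opnorm (Hhat k) <= kappaH) ->
  (* (ii) *)
  (forall y, flow <= f y) -> twice_cont_diff f -> hess_lipschitz f LH ->
  (forall k, opnorm (hess f (x k)) <= M) ->
  (* (iii) *)
  0 < kappas ->
  (forall k, qmodel (f (x k)) (ghat k) (Hhat k) 0 - qmodel (f (x k)) (ghat k) (Hhat k) (shat k)
     >= kappas * Num.max
          (enorm (ghat k) * Num.min (Delta k) (enorm (ghat k) / Num.max (opnorm (Hhat k)) 1))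
          (tau_m (Hhat k) * Delta k ^+ 2)) ->
  (* epsilon, theta *)
  0 < eps ->
  (forall k, (k <= K)%N ->
     0 < (1 - alpha) ^+ 2
         - 4 * M * ((\rank (hess f (x k)))%:R - 1) * alpha ^+ 2 / (eps * (1 - alpha) ^+ 2)) ->
  (forall k, (k <= K)%N -> eps <= crit f (x k)) ->
  let succ k := successful f eta mu (x k) (P k) (ghat k) (Hhat k) (shat k) (Delta k) in
  let c3 := ln ginc / ln (gdec^-1) in
  let c4 D := ln (Delta0 / D) / ln (gdec^-1) in
  (forall D, 0 < D -> D <= Delta0 ->
     (#|[set k : 'I_K.+1 | (gdec^-1 * D <= Delta k) && ~~ succ k]|)%:R
       <= c3 * (#|[set k : 'I_K.+1 | (ginc^-1 * D <= Delta k) && succ k]|)%:R + c4 D) /\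
  (forall D, 0 < D -> D <= Num.min Delta0 (ginc^-1 * Deltamax) ->
     (#|[set k : 'I_K.+1 | (Delta k < ginc^-1 * D) && succ k]|)%:R
       <= c3^-1 * (#|[set k : 'I_K.+1 | (Delta k < gdec^-1 * D) && ~~ succ k]|)%:R).
Proof.
move=> p1 pn D0p DDm gd0 gd1 gi1 eta0 eta1 mu0 al0 al1 Hx0 HD0 _ _ _ Hs Hu
  _ _ _ _ _ _ _ _ eps0 _ _ succ c3 c4.
have gi0 : 0 < ginc by apply: (lt_trans ltr01).
have lgi : 0 < ln ginc by apply: ln_gt0.
have Lpos : 0 < ln gdec^-1 by apply: ln_gt0; rewrite invf_gt1.
have lgd : ln gdec = - ln gdec^-1 by rewrite lnV ?opprK // posrE invr_gt0.
have Hs' : forall k, succ k -> Delta k.+1 = Num.min (ginc * Delta k) Deltamax.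
  by move=> k /Hs [].
have Hu' : forall k, ~~ succ k -> Delta k.+1 = gdec * Delta k.
  by move=> k /Hu [].
have pos s : 0 < ginc ^+ s by apply: exprn_gt0.
have posd s : 0 < gdec ^+ s by apply: exprn_gt0.
split.
- move=> D Dp DD.
  rewrite !card_sum.
  set s := (\sum_(k < K.+1) _)%N; set u := (\sum_(k < K.+1) _)%N.
  have h := @inv1 R Delta succ Delta0 Deltamax gdec ginc D gd0 gi1 HD0 Hs' Hu' DD K.+1.
  have h2 : D <= Delta0 * ginc ^+ u * gdec ^+ s by apply: le_trans h; rewrite le_max lexx orbT.
  have D0' : 0 < Delta0 by apply: lt_le_trans DD.
  have h3 : ln D <= ln Delta0 + ln ginc *+ u + ln gdec *+ s.
    rewrite -lnXn // -lnXn // -!lnM ?posrE ?mulr_gt0 //.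
    by rewrite ler_ln // posrE ?mulr_gt0.
  rewrite /c3 /c4 ln_div ?posrE // mulrAC -mulrDl ler_pdivlMr //.
  rewrite lgd -[ln ginc *+ u]mulr_natr -[_ *+ s]mulr_natr in h3. exact: fin1.
- move=> D Dp.
  rewrite le_min => /andP [DD DM].
  rewrite invle2 // in DM.
  rewrite !card_sum.
  set s := (\sum_(k < K.+1) _)%N; set u := (\sum_(k < K.+1) _)%N.
  have h := @inv2 R Delta succ Delta0 Deltamax gdec ginc D gd0 gi1 Dp HD0 Hs' Hu' DD DM K.+1.
  have h2 : D * ginc ^+ s * gdec ^+ u <= D * 1 by apply: le_trans h _; rewrite mulr1 ge_min lexx orbT.
  rewrite -mulrA ler_pM2l // in h2.
  have h3 : ln ginc *+ s + ln gdec *+ u <= 0.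
    rewrite -lnXn // -lnXn // -!lnM ?posrE ?mulr_gt0 //.
    exact: ln_le0.
  rewrite /c3 invf_div mulrAC ler_pdivlMr //.
  rewrite lgd -[ln ginc *+ s]mulr_natr -[_ *+ u]mulr_natr in h3. exact: fin2.
Qed.
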